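(* Let $P_1,\dots,P_T\in\mathbb{R}^{d\times d}$ be orthogonal projections and let $\tau(1),\tau(2),\dots$ be i.i.d. uniform on $\{1,\dots,T\}$. Let $\bar r=\frac1T\sum_{m=1}^T(d-\operatorname{rank}P_m)$. Then for every $k\ge1$, $$\mathbb{E}_\tau\Big[\frac1T\sum_{m=1}^T\big\|(I-P_m)P_{\tau(k)}\cdots P_{\tau(1)}\big\|^2\Big]\le \frac{1}{k}\cdot\frac1T\sum_{m=1}^T\operatorname{rank}(P_m)=\frac{d-\bar r}{k}.$$
   Context: $\|\cdot\|$ denotes the spectral norm. (In the application, $P_m=I-X_m^+X_m$ is the projection onto $\ker X_m$, so $\operatorname{rank}P_m=d-\operatorname{rank}X_m$ and the bound reads $(d-r_{\mathrm{avg}})/k$ with $r_{\mathrm{avg}}$ the average rank of the data matrices.) *)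

(* Defs.v *)
From HB Require Import structures.
From mathcomp Require Import all_boot all_order all_algebra.
From mathcomp Require Import classical_sets reals.
Set Implicit Arguments. Unset Strict Implicit. Unset Printing Implicit Defensive.
Import Order.TTheory GRing.Theory Num.Theory.
Local Open Scope ring_scope.
Local Open Scope classical_set_scope.

Definition vnorm (R : realType) (d : nat) (v : 'cV[R]_d) : R :=
  Num.sqrt (\sum_(i < d) (v i 0) ^+ 2).

Definition specnorm (R : realType) (d : nat) (A : 'M[R]_d) : R :=
  sup [set vnorm (A *m x) | x in [set x : 'cV[R]_d | vnorm x <= 1]].

Definition orth_proj (R : realType) (d : nat) (P : 'M[R]_d) : Prop :=
  P^T = P /\ P *m P = P.

(* For tau = (tau 0, ..., tau (k-1)), the product
   P_{tau(k-1)} *m ... *m P_{tau(0)} (rightmost factor applied first). *)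
Definition prodP (R : realType) (d T k : nat) (P : 'I_T -> 'M[R]_d)
  (tau : 'I_k -> 'I_T) : 'M[R]_d :=
  foldl (fun A j => P (tau j) *m A) 1%:M (enum 'I_k).

(* Main.v *)
Require Import Defs.
From HB Require Import structures.
From mathcomp Require Import all_boot all_order all_algebra.
From mathcomp Require Import classical_sets reals.
From mathcomp Require Import ring lra.
Import Order.TTheory GRing.Theory Num.Theory.
Local Open Scope ring_scope.

Section Sk.
Variable R : realType.
Variable T : nat.

Fixpoint Sk (k : nat) (h : seq 'I_T -> R) : R :=
  match k with
  | 0 => h [::]
  | k'.+1 => \sum_(a < T) Sk k' (fun s => h (a :: s))
  end.

Lemma Sk_ext k f g : (forall s, f s = g s) -> Sk k f = Sk k g.
Proof.
elim: k f g => [|k IH] f g H /=; first exact: H.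
by apply: eq_bigr => a _; apply: IH => s; apply: H.
Qed.

Lemma Sk_le k f g : (forall s, f s <= g s) -> Sk k f <= Sk k g.
Proof.
elim: k f g => [|k IH] f g H /=; first exact: H.
by apply: ler_sum => a _; apply: IH => s; apply: H.
Qed.

Lemma Sk_ge0 k f : (forall s, 0 <= f s) -> 0 <= Sk k f.
Proof.
elim: k f => [|k IH] f H /=; first exact: H.
by apply: sumr_ge0 => a _; apply: IH => s; apply: H.
Qed.

Lemma Sk_sum k (I : finType) (f : I -> seq 'I_T -> R) :
  Sk k (fun s => \sum_i f i s) = \sum_i Sk k (f i).
Proof.
elim: k f => [|k IH] f //=.
rewrite (eq_bigr (fun a => \sum_i Sk k (fun s => f i (a :: s)))); last first.
  by move=> a _; rewrite -IH.
by rewrite exchange_big.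
Qed.

Lemma Sk_scale k c f : Sk k (fun s => c * f s) = c * Sk k f.
Proof.
elim: k f => [|k IH] f //=.
by rewrite mulr_sumr; apply: eq_bigr => a _; rewrite IH.
Qed.

Lemma Sk_sub k f g : Sk k (fun s => f s - g s) = Sk k f - Sk k g.
Proof.
elim: k f g => [|k IH] f g //=.
by rewrite -sumrB; apply: eq_bigr => a _; rewrite IH.
Qed.

Lemma Sk_rcons k h : Sk k.+1 h = Sk k (fun s => \sum_(a < T) h (rcons s a)).
Proof.
elim: k h => [|k IH] h //.
change (\sum_(a < T) Sk k.+1 (fun s => h (a :: s)) =
  \sum_(a < T) Sk k (fun s => \sum_(b < T) h (rcons (a :: s) b))).
by apply: eq_bigr => a _; rewrite IH.
Qed.

Definition ext (k : nat) (p : 'I_T * {ffun 'I_k -> 'I_T}) : {ffun 'I_k.+1 -> 'I_T} :=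
  [ffun i => if unlift ord0 i is Some j then p.2 j else p.1].

Definition unext (k : nat) (f : {ffun 'I_k.+1 -> 'I_T}) : 'I_T * {ffun 'I_k -> 'I_T} :=
  (f ord0, [ffun j => f (lift ord0 j)]).

Lemma ext_bij k : bijective (@ext k).
Proof.
exists (@unext k).
  case=> a f; rewrite /unext /ext /=; congr pair.
    by rewrite ffunE unlift_none.
  by apply/ffunP => j; rewrite !ffunE liftK.
move=> f; rewrite /unext /ext /=; apply/ffunP => i; rewrite ffunE.
by case: unliftP => [j ->|->] /=; rewrite ?ffunE.
Qed.

Lemma Sk_ffun k (h : seq 'I_T -> R) :
  \sum_(tau : {ffun 'I_k -> 'I_T}) h [seq tau i | i <- enum 'I_k] = Sk k h.
Proof.
elim: k h => [|k IH] h /=.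
  have E : enum 'I_0 = [::] by apply: size0nil; rewrite size_enum_ord.
  rewrite (eq_bigr (fun _ => h [::])); last by move=> tau _; rewrite E.
  by rewrite sumr_const card_ffun !card_ord.
rewrite (reindex (@ext k)); last first.
  by apply: onW_bij; apply: ext_bij.
rewrite -(pair_big xpredT xpredT (fun a f => h [seq (@ext k (a, f)) i | i <- enum 'I_k.+1])) /=.
apply: eq_bigr => a _; rewrite -IH; apply: eq_bigr => f _.
rewrite enum_ordSl /= ffunE unlift_none -map_comp; congr (h (_ :: _)).
by apply: eq_map => j /=; rewrite ffunE liftK.
Qed.

End Sk.
Arguments Sk {R T}. Arguments Sk_ext {R T}. Arguments Sk_le {R T}. Arguments Sk_ge0 {R T}.
Arguments Sk_sum {R T}. Arguments Sk_scale {R T}. Arguments Sk_sub {R T}.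
Arguments Sk_rcons {R T}. Arguments Sk_ffun {R T}.

Section CS.
Variable R : realType.

Lemma cauchy_schwarz (n : nat) (a x : 'I_n -> R) :
  (\sum_j a j * x j) ^+ 2 <= (\sum_j a j ^+ 2) * (\sum_j x j ^+ 2).
Proof.
set A := \sum_j a j ^+ 2; set X := \sum_j x j ^+ 2; set C := \sum_j a j * x j.
have H : \sum_j \sum_l (a j * x l - a l * x j) ^+ 2 = 2 * (A * X) - 2 * C ^+ 2.
  transitivity (\sum_j (a j ^+ 2 * X + x j ^+ 2 * A - 2 * (a j * x j) * C)).
    apply: eq_bigr => j _.
    rewrite /X /A /C !mulr_sumr -big_split -sumrB /=.
    by apply: eq_bigr => l _; ring.
  rewrite sumrB big_split /= -!mulr_suml -/A -/X -/C.
  by rewrite -mulr_sumr -/C; ring.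
have : 0 <= \sum_j \sum_l (a j * x l - a l * x j) ^+ 2.
  by apply: sumr_ge0 => j _; apply: sumr_ge0 => l _; apply: sqr_ge0.
rewrite H; lra.
Qed.

End CS.

Section Frob.
Variable R : realType.
Variable d : nat.

Definition Fr (A : 'M[R]_d) : R := \tr (A^T *m A).

Lemma Fr_sum A : Fr A = \sum_i \sum_j (A i j) ^+ 2.
Proof.
rewrite /Fr /mxtrace exchange_big; apply: eq_bigr => j _.
by rewrite mxE; apply: eq_bigr => i _; rewrite mxE expr2.
Qed.

Lemma Fr_ge0 A : 0 <= Fr A.
Proof. by rewrite Fr_sum; apply: sumr_ge0 => i _; apply: sumr_ge0 => j _; apply: sqr_ge0. Qed.

Lemma Fr_tr A : Fr A^T = Fr A.
Proof. by rewrite /Fr trmxK mxtrace_mulC. Qed.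

Lemma proj_compl (P : 'M[R]_d) : orth_proj P ->
  (1%:M - P)^T = 1%:M - P /\ (1%:M - P) *m (1%:M - P) = 1%:M - P.
Proof.
case=> PT PP; split; first by rewrite linearB /= trmx1 PT.
by rewrite mulmxBl mul1mx mulmxBr mulmx1 PP subrr subr0.
Qed.

Lemma Fr_projmul (P B : 'M[R]_d) : orth_proj P ->
  Fr (P *m B) = \tr (B^T *m P *m B).
Proof.
case=> PT PP; rewrite /Fr trmx_mul PT mulmxA -[B^T *m P *m P]mulmxA PP.
by [].
Qed.

Lemma Fr_split_l (P B : 'M[R]_d) : orth_proj P ->
  Fr B = Fr (P *m B) + Fr ((1%:M - P) *m B).
Proof.
move=> hP; rewrite !Fr_projmul //; last exact: proj_compl.
rewrite mulmxBr mulmx1 mulmxBl -mxtraceD addrC subrK.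
by [].
Qed.

Lemma Fr_split_r (P B : 'M[R]_d) : orth_proj P ->
  Fr B = Fr (B *m P) + Fr (B *m (1%:M - P)).
Proof.
move=> hP; have [PT _] := hP; have [QT _] := proj_compl P hP.
rewrite -Fr_tr -[Fr (B *m P)]Fr_tr -[Fr (B *m _)]Fr_tr !trmx_mul PT QT.
exact: Fr_split_l.
Qed.

Lemma Fr_mulr_le (P B : 'M[R]_d) : orth_proj P -> Fr (B *m P) <= Fr B.
Proof. by move=> hP; rewrite [leRHS](Fr_split_r P B hP) lerDl Fr_ge0. Qed.

Lemma tr_idem (P : 'M[R]_d) : P *m P = P -> \tr P = (\rank P)%:R.
Proof.
move=> PP.
set L := col_ebase P; set U := row_ebase P; set r := \rank P.
have E : L *m pid_mx r *m U = P by apply: mulmx_ebase.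
have Lu : L \in unitmx by apply: col_ebase_unit.
have Uu : U \in unitmx by apply: row_ebase_unit.
have hr : (r <= d)%N by apply: rank_leq_row.
have K : pid_mx r *m (U *m L) *m pid_mx r = pid_mx r :> 'M[R]_d.
  have : L *m (pid_mx r *m (U *m L) *m pid_mx r) *m U = L *m pid_mx r *m U.
    transitivity (P *m P); last by rewrite PP E.
    by rewrite -E !mulmxA.
  move/(congr1 (mulmx^~ (invmx U))); rewrite -!mulmxA !mulmxV // !mulmx1.
  by move/(congr1 (mulmx (invmx L))); rewrite !mulmxA !mulVmx // !mul1mx.
rewrite -E -mulmxA mxtrace_mulC -mulmxA.
rewrite -{1}(@pid_mx_id R d d d r hr) -mulmxA mxtrace_mulC.
rewrite K.
rewrite /mxtrace (eq_bigr (fun i : 'I_d => ((i < r)%N)%:R)); last first.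
  by move=> i _; rewrite mxE (eqxx (i : nat)).
rewrite -(big_mkord xpredT (fun i => ((i < r)%N)%:R)) (big_cat_nat (leq0n r) hr) /=.
rewrite [X in _ + X]big_nat_cond [X in _ + X](eq_bigr (fun _ => 0)); last first.
  by move=> i /andP[/andP[ri _] _]; rewrite ltnNge ri.
rewrite big1_eq addr0 big_nat_cond (eq_bigr (fun _ => 1)); last first.
  by move=> i /andP[/andP[_ ->] _].
by rewrite -big_nat_cond sumr_const_nat subn0.
Qed.

Lemma Fr_proj (P : 'M[R]_d) : orth_proj P -> Fr P = (\rank P)%:R.
Proof. by case=> PT PP; rewrite /Fr PT PP tr_idem. Qed.

Lemma vnorm_le (A : 'M[R]_d) (x : 'cV[R]_d) : vnorm x <= 1 ->
  vnorm (A *m x) <= Num.sqrt (Fr A).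
Proof.
move=> hx.
have hx2 : \sum_j x j 0 ^+ 2 <= 1.
  have h0 : 0 <= \sum_j x j 0 ^+ 2 by apply: sumr_ge0 => j _; apply: sqr_ge0.
  by rewrite -(ler_sqrt _ ler01) sqrtr1.
rewrite /vnorm ler_sqrt ?Fr_ge0 // Fr_sum; apply: ler_sum => i _.
rewrite mxE; apply: (le_trans (@cauchy_schwarz R d (fun j => A i j) (fun j => x j 0))).

rewrite -[leRHS]mulr1; apply: ler_wpM2l => //.
by apply: sumr_ge0 => j _; apply: sqr_ge0.
Qed.

Local Open Scope classical_set_scope.
Lemma specnorm_sq (A : 'M[R]_d) : specnorm A ^+ 2 <= Fr A.
Proof.
set E := [set vnorm (A *m x) | x in [set x : 'cV[R]_d | vnorm x <= 1]].
have E0 : E 0.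
  exists (0 : 'cV[R]_d); last by rewrite mulmx0 /vnorm big1 ?sqrtr0 // => i _; rewrite mxE expr0n.
  by rewrite /= /vnorm big1 ?sqrtr0 // => i _; rewrite mxE expr0n.
have ub : ubound E (Num.sqrt (Fr A)).
  by move=> y [x hx <-]; apply: vnorm_le.
have s_le : specnorm A <= Num.sqrt (Fr A) by apply: ge_sup => //; exists 0.
have s_ge : 0 <= specnorm A.
  by apply: (ub_le_sup (E := E)) => //; exists (Num.sqrt (Fr A)).
rewrite -[leRHS](sqr_sqrtr (Fr_ge0 A)) !expr2.
by apply: ler_pM.
Qed.
End Frob.
Arguments Fr {R d}. Arguments Fr_ge0 {R d}. Arguments Fr_split_l {R d}.
Arguments Fr_mulr_le {R d}. Arguments Fr_proj {R d}. Arguments specnorm_sq {R d}.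
Arguments Fr_sum {R d}.




Section Main.
Variable R : realType.
Variables d T : nat.
Variable P : 'I_T -> 'M[R]_d.
Hypothesis hP : forall m, orth_proj (P m).

Definition Q (s : seq 'I_T) : 'M[R]_d := foldl (fun A x => P x *m A) 1%:M s.

Lemma Q_foldl_mul (B C : 'M[R]_d) s :
  foldl (fun A x => P x *m A) (B *m C) s = foldl (fun A x => P x *m A) B s *m C.
Proof. by elim: s B => [|a s IH] B //=; rewrite mulmxA IH. Qed.

Lemma Q_cons a s : Q (a :: s) = Q s *m P a.
Proof. by rewrite /Q /= mulmx1 -[P a]mul1mx Q_foldl_mul mul1mx. Qed.

Lemma Q_rcons s a : Q (rcons s a) = P a *m Q s.
Proof. by rewrite /Q foldl_rcons. Qed.

Lemma prodP_Q k (tau : 'I_k -> 'I_T) : prodP P tau = Q [seq tau i | i <- enum 'I_k].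
Proof.
rewrite /prodP /Q; elim: (enum 'I_k) 1%:M => [|i s IH] B //=.
Qed.

Definition G (s : seq 'I_T) : R := \sum_(m < T) Fr ((1%:M - P m) *m Q s).
Definition H (n : nat) : R := Sk n (fun s => Fr (Q s)).

Lemma G_eq s : G s = T%:R * Fr (Q s) - \sum_(m < T) Fr (Q (rcons s m)).
Proof.
rewrite /G (eq_bigr (fun m => Fr (Q s) - Fr (Q (rcons s m)))); last first.
  by move=> m _; rewrite (Fr_split_l (P m) (Q s) (hP m)) Q_rcons; lra.
by rewrite sumrB sumr_const card_ord mulr_natl.
Qed.

Lemma Sk_G n : Sk n G = T%:R * H n - H n.+1.
Proof.
rewrite (Sk_ext n _ _ G_eq) Sk_sub Sk_scale /H (Sk_rcons n).
by [].
Qed.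

Lemma G_ge0 s : 0 <= G s.
Proof. by apply: sumr_ge0 => m _; apply: Fr_ge0. Qed.

Lemma H_ge0 n : 0 <= H n.
Proof. by apply: Sk_ge0 => s; apply: Fr_ge0. Qed.

Lemma Sk_G_mono n : Sk n.+1 G <= T%:R * Sk n G.
Proof.
rewrite [Sk n.+1 G]/=.
rewrite (_ : T%:R * Sk n G = \sum_(a < T) Sk n G); last first.
  by rewrite sumr_const card_ord mulr_natl.
apply: ler_sum => a _.
apply: Sk_le => s; apply: ler_sum => m _.
by rewrite Q_cons mulmxA; apply: Fr_mulr_le.
Qed.

Lemma Sk_G_bound n : n%:R * Sk n G <= T%:R ^+ n * H 1 - H n.+1.
Proof.
elim: n => [|n IH]; first by rewrite mul0r expr0 mul1r subrr.
have h1 := Sk_G_mono n; have h2 := Sk_G n.+1.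
rewrite -addn1 natrD mulrDl mul1r addn1 exprS.
have hT0 : 0 <= T%:R :> R by apply: ler0n.
have h3 : n%:R * Sk n.+1 G <= T%:R * (n%:R * Sk n G).
  rewrite mulrCA; apply: ler_wpM2l => //.
have h4 : T%:R * (n%:R * Sk n G) <= T%:R * (T%:R ^+ n * H 1 - H n.+1).
  by apply: ler_wpM2l.
rewrite h2; rewrite h2 in h1.
rewrite h2 in h3; have h5 := le_trans h3 h4; rewrite mulrBr in h5.
rewrite -mulrA; lra.
Qed.

End Main.
Arguments G {R d T}. Arguments H {R d T}. Arguments Q {R d T}.
Arguments Sk_G_bound {R d T P}. Arguments H_ge0 {R d T}. Arguments prodP_Q {R d T}.

Theorem mainTheorem8 (R : realType) (d T : nat) (P : 'I_T -> 'M[R]_d)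
  (hT : (0 < T)%N) (hP : forall m, orth_proj (P m)) (k : nat) (hk : (1 <= k)%N) :
  let rbar := T%:R^-1 * \sum_(m < T) (d - \rank (P m))%:R in
  let RHS := k%:R^-1 * (T%:R^-1 * \sum_(m < T) (\rank (P m))%:R) in
  (* expectation over tau : {1..T}^k i.i.d. uniform = average over all k-tuples *)
  (T%:R ^- k) * \sum_(tau : {ffun 'I_k -> 'I_T})
      (T%:R^-1 * \sum_(m < T) specnorm ((1%:M - P m) *m prodP P tau) ^+ 2)
    <= RHS
  /\ RHS = (d%:R - rbar) / k%:R.
Proof.
move=> rbar RHS.
have hTp : 0 < T%:R :> R by rewrite ltr0n.
have hkp : 0 < k%:R :> R by rewrite ltr0n.
have hT0 : T%:R != 0 :> R by rewrite lt0r_neq0.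
have hk0 : k%:R != 0 :> R by rewrite lt0r_neq0.
split; last first.
  have Hr : \sum_(m < T) (d - \rank (P m))%:R =
      \sum_(m < T) (d%:R - (\rank (P m))%:R) :> R.
    by apply: eq_bigr => m _; rewrite natrB // rank_leq_row.
  rewrite /RHS /rbar Hr sumrB sumr_const card_ord.
  rewrite -mulr_natl; field; rewrite ?hT0 ?hk0 //.
set S := Sk k (G P).
have step1 : \sum_(tau : {ffun 'I_k -> 'I_T})
      (T%:R^-1 * \sum_(m < T) specnorm ((1%:M - P m) *m prodP P tau) ^+ 2)
    <= T%:R^-1 * S.
  rewrite /S -Sk_ffun mulr_sumr; apply: ler_sum => tau _.
  apply: ler_wpM2l; first by rewrite invr_ge0 ler0n.
  rewrite /G prodP_Q; apply: ler_sum => m _; exact: specnorm_sq.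
have step2 := Sk_G_bound hP k.
have H1 : H P 1 = \sum_(m < T) (\rank (P m))%:R.
  rewrite /H /=; apply: eq_bigr => a _.
  by rewrite /Q /= mulmx1 Fr_proj.
have Hk := H_ge0 P k.+1.
rewrite H1 in step2.
have step3 : S <= k%:R^-1 * (T%:R ^+ k * \sum_(m < T) (\rank (P m))%:R).
  rewrite ler_pdivlMl //; rewrite -/S in step2; lra.
have hu : 0 <= (T%:R ^+ k)^-1 :> R by rewrite invr_ge0 exprn_ge0 // ler0n.
apply: le_trans (ler_wpM2l hu step1) _.
apply: le_trans (ler_wpM2l hu (ler_wpM2l _ step3)) _.
  by rewrite invr_ge0 ler0n.
rewrite /RHS.
have hu0 : T%:R ^+ k != 0 :> R by rewrite expf_neq0.
move: hu0; set u := T%:R ^+ k => hu0.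
rewrite le_eqVlt; apply/orP; left; apply/eqP.
field; rewrite ?hT0 ?hk0 ?hu0 //.
Qed.
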